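(* Let $k$ be a positive integer and let $T$ be a tournament on $n$ vertices with $n \geq (2k-1)2^{2k}$. Then $\mathrm{sinv}'_k(T) \leq \mathrm{sinv}_k(T) \leq 1$.
   Context: A tournament is an orientation of a complete graph. For a digraph $D$ and $X \subseteq V(D)$, inverting $X$ means reversing the direction of every arc of $D$ with both endvertices in $X$. A digraph $D$ is $k$-arc-strong if for every partition $(V_1,V_2)$ of $V(D)$ into nonempty sets there are at least $k$ arcs from $V_1$ to $V_2$; it is $k$-strong if $|V(D)|\ge k+1$ and $D-S$ is strongly connected for every $S\subseteq V(D)$ with $|S|<k$. $\mathrm{sinv}'_k(D)$ (resp. $\mathrm{sinv}_k(D)$) is the minimum number of sets whose successive inversion transforms $D$ into a $k$-arc-strong (resp. $k$-strong) digraph. *)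

(* Defs.v *)
From mathcomp Require Import all_boot.
Set Implicit Arguments. Unset Strict Implicit. Unset Printing Implicit Defensive.

(* A digraph on a finite vertex type V is given by its arc relation D : rel V
   (D x y = there is an arc x -> y).  Loops are excluded by tournaments. *)

Definition is_tournament (V : finType) (D : rel V) : Prop :=
  (forall x, ~~ D x x) /\
  (forall x y, x != y -> (D x y || D y x) && ~~ (D x y && D y x)).

Definition invert (V : finType) (X : {set V}) (D : rel V) : rel V :=
  fun x y => if (x \in X) && (y \in X) then D y x else D x y.

Definition invert_seq (V : finType) (Xs : seq {set V}) (D : rel V) : rel V :=
  foldl (fun D' X => invert X D') D Xs.

Definition strongly_connected_on (V : finType) (D : rel V) (U : {set V}) : Prop :=
  forall x y, x \in U -> y \in U ->
    connect (fun a b => [&& a \in U, b \in U & D a b]) x y.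

Definition k_arc_strong (V : finType) (k : nat) (D : rel V) : Prop :=
  forall V1 : {set V}, V1 != set0 -> ~: V1 != set0 ->
    k <= #|[set p : V * V | (p.1 \in V1) && (p.2 \notin V1) && D p.1 p.2]|.

Definition k_strong (V : finType) (k : nat) (D : rel V) : Prop :=
  k.+1 <= #|V| /\
  forall S : {set V}, #|S| < k -> strongly_connected_on D (~: S).

Definition reachable_by (V : finType) (P : rel V -> Prop) (D : rel V) (m : nat) : Prop :=
  exists Xs : seq {set V}, size Xs = m /\ P (invert_seq Xs D).

Definition is_min_inv (V : finType) (P : rel V -> Prop) (D : rel V) (s : nat) : Prop :=
  reachable_by P D s /\ forall m, reachable_by P D m -> s <= m.

Definition is_sinv (V : finType) (k : nat) (D : rel V) (s : nat) : Prop :=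
  is_min_inv (k_strong k) D s.
Definition is_sinv' (V : finType) (k : nat) (D : rel V) (s : nat) : Prop :=
  is_min_inv (k_arc_strong k) D s.

(* Main.v *)
Require Import Defs.
From mathcomp Require Import all_boot zify.
From Stdlib Require Import Classical.
Set Implicit Arguments. Unset Strict Implicit. Unset Printing Implicit Defensive.

Lemma cross (V : finType) (e : rel V) (A : {set V}) x y :
  connect e x y -> x \in A -> y \notin A ->
  exists a b, [/\ a \in A, b \notin A & e a b].
Proof.
move=> /connectP [p]; elim: p x => [|z p IH] x /=.
  by move=> _ -> ->.
move=> /andP [exz pz] yl xA yA.
case zA: (z \in A); first exact: IH pz yl zA yA.
by exists x, z; rewrite zA.
Qed.

Lemma avoid (V : finType) (A S : {set V}) : #|S| < #|A| ->
  exists2 a, a \in A & a \notin S.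
Proof.
move=> h; apply/subsetPn; apply/negP => sub.
by move: (subset_leq_card sub); rewrite leqNgt h.
Qed.

Lemma strong_arc (V : finType) k (D : rel V) : k_strong k D -> k_arc_strong k D.
Proof.
move=> [hV hS] V1 n1 n2.
set F := [set p : V * V | _].
rewrite leqNgt; apply/negP => hF.
have [[x [y [xV1 yV1 nxy]]] | all] :
  (exists x y, [/\ x \in V1, y \notin V1 & ~~ D x y]) \/
  (forall x y, x \in V1 -> y \notin V1 -> D x y).
- case: (boolP [exists x, exists y, [&& x \in V1, y \notin V1 & ~~ D x y]]).
    move=> /existsP [x /existsP [y /and3P [h1 h2 h3]]]; left; by exists x, y.
  move=> /negP hn; right => x y hx hy; apply/negPn/negP => hd; apply: hn.
  by apply/existsP; exists x; apply/existsP; exists y; rewrite hx hy hd.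
- pose S := [set (if p.1 == x then p.2 else p.1) | p in F].
  have hSF : #|S| < k by apply: leq_ltn_trans (leq_imset_card _ _) hF.
  have xS : x \in ~: S.
    rewrite inE; apply/imsetP => [[p pF]].
    move: pF; rewrite inE => /andP [/andP [h1 h2] h3].
    case: eqP => [e|ne] hx.
      by rewrite hx (negbTE h2) in xV1.
    by apply: ne; rewrite hx.
  have yS : y \in ~: S.
    rewrite inE; apply/imsetP => [[p pF]].
    move: pF; rewrite inE => /andP [/andP [h1 h2] h3].
    case: eqP => [e|ne] hy.
      by move: nxy; rewrite hy -e h3.
    by move: yV1; rewrite hy h1.
  have := hS S hSF x y xS yS.
  move=> /cross /(_ xV1 yV1) [a [b [aV1 bV1 /and3P [aS bS dab]]]].
  have abF : (a, b) \in F by rewrite inE /= aV1 bV1 dab.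
  have : (if (a, b).1 == x then (a, b).2 else (a, b).1) \in S.
    by apply/imsetP; exists (a, b).
  by rewrite /=; case: eqP => _ h; [move: bS | move: aS]; rewrite inE h.
- have sub : setX V1 (~: V1) \subset F.
    apply/subsetP => [[a b]]; rewrite !inE /= => /andP [ha hb].
    by rewrite ha hb all.
  have := subset_leq_card sub; rewrite cardsX => h.
  have hc := cardsC V1.
  have h1 : 0 < #|V1| by rewrite card_gt0.
  have h2 : 0 < #|~: V1| by rewrite card_gt0.
  have : #|V1| * #|~: V1| < k by apply: leq_ltn_trans hF.
  nia.
Qed.

Lemma core_kstrong (V : finType) (D : rel V) k (P Q R : {set V}) :
  k.+1 <= #|V| -> k <= #|P| -> k <= #|Q| -> k <= #|R| ->
  (forall p q, p \in P -> q \in Q -> D p q) ->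
  (forall q r, q \in Q -> r \in R -> D q r) ->
  (forall r p, r \in R -> p \in P -> D r p) ->
  (forall v, v \notin P :|: Q :|: R ->
     k <= #|[set c in P :|: Q :|: R | D v c]| /\
     k <= #|[set c in P :|: Q :|: R | D c v]|) ->
  k_strong k D.
Proof.
move=> hV hP hQ hR PQ QR RP out; split => // S hS x y hx hy.
set e := (fun a b => _).
have [p0 p0P p0S] := avoid (leq_trans hS hP).
have [q0 q0Q q0S] := avoid (leq_trans hS hQ).
have [r0 r0R r0S] := avoid (leq_trans hS hR).
have E : forall a b, a \notin S -> b \notin S -> D a b -> connect e a b.
  by move=> a b ha hb hd; apply: connect1; rewrite /e !inE ha hb hd.
have hc : forall c, c \notin S -> c \in P :|: Q :|: R ->
    connect e c p0 /\ connect e p0 c.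
  move=> c cS; rewrite !inE => /orP [/orP [cP|cQ]|cR]; split.
  - apply: (connect_trans (E _ _ cS q0S (PQ _ _ cP q0Q))).
    apply: (connect_trans (E _ _ q0S r0S (QR _ _ q0Q r0R))).
    exact: E _ _ r0S p0S (RP _ _ r0R p0P).
  - apply: (connect_trans (E _ _ p0S q0S (PQ _ _ p0P q0Q))).
    apply: (connect_trans (E _ _ q0S r0S (QR _ _ q0Q r0R))).
    exact: E _ _ r0S cS (RP _ _ r0R cP).
  - apply: (connect_trans (E _ _ cS r0S (QR _ _ cQ r0R))).
    exact: E _ _ r0S p0S (RP _ _ r0R p0P).
  - exact: E _ _ p0S cS (PQ _ _ p0P cQ).
  - exact: E _ _ cS p0S (RP _ _ cR p0P).
  - apply: (connect_trans (E _ _ p0S q0S (PQ _ _ p0P q0Q))).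
    exact: E _ _ q0S cS (QR _ _ q0Q cR).
have hz : forall z, z \notin S -> connect e z p0 /\ connect e p0 z.
  move=> z zS; case: (boolP (z \in P :|: Q :|: R)) => zC; first exact: hc.
  have [ho hi] := out z zC.
  have [c1 c1in c1S] := avoid (leq_trans hS ho).
  have [c2 c2in c2S] := avoid (leq_trans hS hi).
  move: c1in c2in; rewrite !inE => /andP [c1C d1] /andP [c2C d2].
  split.
    apply: (connect_trans (E _ _ zS c1S d1)).
    by case: (hc c1 c1S); rewrite ?inE.
  apply: (connect_trans _ (E _ _ c2S zS d2)).
  by case: (hc c2 c2S); rewrite ?inE.
rewrite inE in hx; rewrite inE in hy.
exact: connect_trans (proj1 (hz x hx)) (proj2 (hz y hy)).
Qed.

Lemma card_sum (V : finType) (W : {set V}) (f : pred V) :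
  #|[set u in W | f u]| = \sum_(u in W) (f u : nat).
Proof.
rewrite -sum1_card big_mkcond /= [RHS]big_mkcond /=.
by apply: eq_bigr => u _; rewrite !inE; case: (u \in W); case: (f u).
Qed.


Lemma maxout (V : finType) (D : rel V) : is_tournament D ->
  forall W : {set V}, W != set0 ->
  exists2 v, v \in W & #|W| <= 2 * #|[set u in W | D v u]| + 1.
Proof.
move=> [irr tot] W nW.
case: (boolP [exists v, (v \in W) && (#|W| <= 2 * #|[set u in W | D v u]| + 1)]).
  by move=> /existsP [v /andP [h1 h2]]; exists v.
move=> /negP hn; exfalso.
have small : forall v, v \in W -> 2 * #|[set u in W | D v u]| + 2 <= #|W|.
  move=> v vW; rewrite leqNgt; apply/negP => h; apply: hn.
  apply/existsP; exists v; rewrite vW /=; lia.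
have oi : forall v, v \in W ->
   \sum_(u in W) (D v u : nat) + \sum_(u in W) (D u v : nat) = #|W| - 1.
  move=> v vW; rewrite -big_split /=.
  rewrite (cardsD1 v W) vW add1n subSS subn0 -sum1_card.
  rewrite (bigD1 v) //= (negbTE (irr v)) add0n.
  rewrite [RHS](eq_bigl (fun u => (u \in W) && (u != v))); last first.
    by move=> u; rewrite !inE andbC.
  apply: eq_bigr => u /andP [uW uv].
  have := tot v u; rewrite eq_sym uv => /(_ isT).
  by case: (D v u); case: (D u v).
have ex : \sum_(v in W) \sum_(u in W) (D u v : nat) =
          \sum_(v in W) \sum_(u in W) (D v u : nat).
  by rewrite exchange_big.
have tot2 : \sum_(v in W) (\sum_(u in W) (D v u : nat) + \sum_(u in W) (D u v : nat))
           = #|W| * (#|W| - 1).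
  by rewrite -sum_nat_const; apply: eq_bigr.
rewrite big_split /= ex in tot2.
have le2 : \sum_(v in W) (2 * \sum_(u in W) (D v u : nat) + 2) <= \sum_(v in W) #|W|.
  by apply: leq_sum => v vW; rewrite -card_sum; exact: small.
rewrite sum_nat_const big_split /= -big_distrr /= sum_nat_const in le2.
have : 0 < #|W| by rewrite card_gt0.
nia.
Qed.


Lemma phase (V : finType) (D : rel V) : is_tournament D ->
  forall m (W : {set V}), 2 ^ m <= #|W| + 1 ->
  exists P W' : {set V}, [/\ P \subset W, W' \subset W, #|P| = m,
    (forall p w, p \in P -> w \in W' -> D p w) &
    #|W| + 1 <= 2 ^ m * (#|W'| + 1)].
Proof.
move=> tour; elim=> [|m IH] W hW.
  exists (set0 : {set V}), W; split => //; rewrite ?sub0set ?cards0 ?expn0 ?mul1n //.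
  by move=> p w; rewrite in_set0.
have nW : W != set0.
  rewrite -card_gt0; move: hW; rewrite expnS.
  have := expn_gt0 2 m; lia.
have [v vW hv] := maxout tour nW.
set W1 := [set u in W | D v u] in hv.
have hW1 : 2 ^ m <= #|W1| + 1 by move: hW; rewrite expnS; lia.
have [P1 [W' [P1W1 W'W1 cP1 arcs hc]]] := IH W1 hW1.
have W1W : W1 \subset W by apply/subsetP => u; rewrite inE => /andP [].
have vP1 : v \notin P1.
  apply/negP => /(subsetP P1W1); rewrite inE => /andP [_].
  by case: tour => irr _; rewrite (negbTE (irr v)).
exists (v |: P1), W'; split.
- by rewrite subUset sub1set vW (subset_trans P1W1 W1W).
- exact: subset_trans W'W1 W1W.
- by rewrite cardsU1 vP1 cP1.
- move=> p w; rewrite in_setU1 => /orP [/eqP -> | pP1] wW'; last exact: arcs.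
  by have := subsetP W'W1 w wW'; rewrite inE => /andP [].
- rewrite expnS; nia.
Qed.

Lemma tour_conv (V : finType) (T : rel V) : is_tournament T ->
  is_tournament (fun x y => T y x).
Proof.
move=> [irr tot]; split => // x y xy.
by have := tot x y xy; case: (T x y); case: (T y x).
Qed.

Lemma split_card (V : finType) (D : rel V) (Y : {set V}) v :
  is_tournament D -> v \notin Y ->
  #|Y| <= #|[set c in Y | D v c]| + #|[set c in Y | D c v]|.
Proof.
move=> [_ tot] vY.
apply: leq_trans (leq_card_setU _ _).
apply: subset_leq_card; apply/subsetP => c cY; rewrite !inE cY /=.
have cv : v != c by apply/eqP => e; rewrite e cY in vY.
by have /andP [] := tot v c cv.
Qed.

Lemma ar (k n x y z w : nat) : 2 * k - 1 <= n -> n <= x + y -> x <= z -> z < k ->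
  y <= w -> k <= w.
Proof. lia. Qed.

Lemma one_inv (V : finType) (T : rel V) (k : nat) :
  0 < k -> is_tournament T -> (2 * k - 1) * 2 ^ (2 * k) <= #|V| ->
  exists X : {set V}, k_strong k (invert X T).
Proof.
move=> k0 tour hV.
have ha : 0 < 2 ^ k := expn_gt0 2 k.
have e2 : 2 ^ (2 * k) = 2 ^ k * 2 ^ k by rewrite mul2n -addnn expnD.
rewrite e2 in hV.
have h0 : 2 ^ k <= #|[set: V]| + 1 by rewrite cardsT; nia.
have [P [W1 [_ _ cP PW1 h1]]] := phase tour h0.
rewrite cardsT in h1.
have h0' : 2 ^ k <= #|W1| + 1 by nia.
have [R [Q [RW1 QW1 cR QR h2]]] := phase (tour_conv tour) h0'.
have cQ : 2 * k - 1 <= #|Q| by nia.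
have PQ : forall p q, p \in P -> q \in Q -> T p q.
  by move=> p q pP qQ; apply: PW1 => //; exact: (subsetP QW1).
have PR : forall p r, p \in P -> r \in R -> T p r.
  by move=> p r pP rR; apply: PW1 => //; exact: (subsetP RW1).
have QR' : forall q r, q \in Q -> r \in R -> T q r by move=> q r qQ rR; exact: QR.
have [irr tot] := tour.
have dPQ : forall x, x \in P -> x \notin Q.
  by move=> x xP; apply/negP => xQ; have := PQ x x xP xQ; rewrite (negbTE (irr x)).
have dPR : forall x, x \in P -> x \notin R.
  by move=> x xP; apply/negP => xR; have := PR x x xP xR; rewrite (negbTE (irr x)).
have dQR : forall x, x \in Q -> x \notin R.
  by move=> x xQ; apply/negP => xR; have := QR' x x xQ xR; rewrite (negbTE (irr x)).
set C := P :|: Q :|: R.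
pose bad v := (#|[set c in C | T v c]| < k) || (#|[set c in C | T c v]| < k).
pose X := P :|: R :|: [set v | (v \notin C) && bad v].
exists X.
have PX : forall p, p \in P -> p \in X by move=> p pP; rewrite !inE pP.
have RX : forall r, r \in R -> r \in X by move=> r rR; rewrite !inE rR orbT.
have QX : forall q, q \in Q -> q \notin X.
  move=> q qQ.
  have qP : q \notin P by apply/negP => qP; have := dPQ q qP; rewrite qQ.
  by rewrite !inE (negbTE qP) (negbTE (dQR q qQ)) qQ.
have outX : forall v, v \notin C -> (v \in X) = bad v.
  move=> v vC; move: (vC); rewrite /C !inE => /norP [/norP [vP vQ] vR].
  by rewrite (negbTE vP) (negbTE vQ) (negbTE vR).
apply: (@core_kstrong _ _ k P Q R).
- have := ltn_expl k (ltnSn 1); nia.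
- by rewrite cP.
- lia.
- by rewrite cR.
- by move=> p q pP qQ; rewrite /invert (PX p pP) (negbTE (QX q qQ)) /= PQ.
- by move=> q r qQ rR; rewrite /invert (negbTE (QX q qQ)) /= QR'.
- by move=> r p rR pP; rewrite /invert (RX r rR) (PX p pP) /= PR.
move=> v vC; rewrite -/C in vC *.
case bv: (bad v); last first.
  have vX : v \notin X by rewrite outX // bv.
  have E1 : [set c in C | invert X T v c] = [set c in C | T v c].
    by apply/setP => c; rewrite !inE /invert (negbTE vX).
  have E2 : [set c in C | invert X T c v] = [set c in C | T c v].
    by apply/setP => c; rewrite !inE /invert (negbTE vX) andbF.
  rewrite E1 E2; move/norP: (negbT bv) => [].
  by rewrite -!leqNgt.
have vX : v \in X by rewrite outX // bv.
have QC : forall c, c \in Q -> c \in C by move=> c cq; rewrite /C !inE cq orbT.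
have PRC : forall c, c \in P :|: R -> c \in C.
  by move=> c; rewrite !inE => /orP [->|->]; rewrite ?orbT.
have PRX : forall c, c \in P :|: R -> c \in X.
  by move=> c; rewrite inE => /orP [/PX|/RX].
have vQ : v \notin Q by apply: contra vC; apply: QC.
have vPR : v \notin P :|: R by apply: contra vC; apply: PRC.
have cPR : #|P :|: R| = 2 * k.
  rewrite cardsU cP cR.
  have -> : P :&: R = set0.
    by apply/setP => x; rewrite !inE; case xP: (x \in P) => //=; rewrite (negbTE (dPR x xP)).
  by rewrite cards0; lia.
have sQ := split_card tour vQ.
have sPR := split_card tour vPR.
have oQ : [set c in Q | T v c] \subset [set c in C | invert X T v c].
  apply/subsetP => c; rewrite inE => /andP [g1 g2].
  by rewrite inE (QC c g1) /invert vX (negbTE (QX c g1)) /=.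
have iQ : [set c in Q | T c v] \subset [set c in C | invert X T c v].
  apply/subsetP => c; rewrite inE => /andP [g1 g2].
  by rewrite inE (QC c g1) /invert vX (negbTE (QX c g1)) /=.
have oPR : [set c in P :|: R | T c v] \subset [set c in C | invert X T v c].
  apply/subsetP => c; rewrite inE => /andP [g1 g2].
  by rewrite inE (PRC c g1) /invert vX (PRX c g1).
have iPR : [set c in P :|: R | T v c] \subset [set c in C | invert X T c v].
  apply/subsetP => c; rewrite inE => /andP [g1 g2].
  by rewrite inE (PRC c g1) /invert vX (PRX c g1).
have sQo : [set c in Q | T v c] \subset [set c in C | T v c].
  by apply/subsetP => c; rewrite inE => /andP [g1 g2]; rewrite inE (QC c g1).
have sQi : [set c in Q | T c v] \subset [set c in C | T c v].
  by apply/subsetP => c; rewrite inE => /andP [g1 g2]; rewrite inE (QC c g1).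
have sPRo : [set c in P :|: R | T v c] \subset [set c in C | T v c].
  by apply/subsetP => c; rewrite inE => /andP [g1 g2]; rewrite inE (PRC c g1).
have sPRi : [set c in P :|: R | T c v] \subset [set c in C | T c v].
  by apply/subsetP => c; rewrite inE => /andP [g1 g2]; rewrite inE (PRC c g1).
have cPR' : 2 * k - 1 <= #|P :|: R| by rewrite cPR leq_subr.
move: bv; rewrite /bad => /orP [hb|hb]; split.
- apply: leq_trans (subset_leq_card oPR).
  exact: ar cPR' sPR (subset_leq_card sPRo) hb (leqnn _).
- apply: leq_trans (subset_leq_card iQ).
  exact: ar cQ sQ (subset_leq_card sQo) hb (leqnn _).
- apply: leq_trans (subset_leq_card oQ).
  rewrite addnC in sQ.
  exact: ar cQ sQ (subset_leq_card sQi) hb (leqnn _).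
- apply: leq_trans (subset_leq_card iPR).
  rewrite addnC in sPR.
  exact: ar cPR' sPR (subset_leq_card sPRi) hb (leqnn _).
Qed.

Theorem theorem6p1 (V : finType) (T : rel V) (k : nat) :
  0 < k -> is_tournament T -> (2 * k - 1) * 2 ^ (2 * k) <= #|V| ->
  exists s s' : nat, [/\ is_sinv k T s, is_sinv' k T s', s' <= s & s <= 1].
Proof.
move=> k0 tour hV.
have [X hX] := one_inv k0 tour hV.
case: (classic (k_strong k T)) => hT.
  exists 0, 0; split => //.
    by split => // ; exists [::].
  by split => //; exists [::]; split => //; exact: strong_arc.
have min1 : forall m, reachable_by (k_strong k) T m -> 1 <= m.
  move=> [|m] // [Xs [hs hk]]; case: Xs hs hk => // _ hk; by case: hT.
case: (classic (k_arc_strong k T)) => hT'.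
  exists 1, 0; split => //.
    by split => //; exists [:: X].
  by split => //; exists [::].
exists 1, 1; split => //.
  by split => //; exists [:: X].
split; first by exists [:: X]; split => //; exact: strong_arc.
move=> [|m] // [Xs [hs hk]]; case: Xs hs hk => // _ hk; by case: hT'.
Qed.
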